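(* Let $G$ and $T$ be graphs of order $n$, where $T$ is a tree. If $3\Delta(G)+\ell(T)-2<n$, then $G$ and $T$ pack.
   Context: All graphs are finite and simple; $\Delta(G)$ is the maximum degree of $G$ and $\ell(T)$ is the number of leaves (vertices of degree $1$) of $T$. For graphs $G$ and $H$ with $|V(G)|\ge |V(H)|$, we say $G$ and $H$ pack if there is an injective function $f:V(H)\to V(G)$ such that for every edge $xy\in E(H)$, $f(x)f(y)\notin E(G)$. *)

(* Defs.v *)
From mathcomp Require Import all_boot all_order.
Set Implicit Arguments. Unset Strict Implicit. Unset Printing Implicit Defensive.

Definition simple_graph (V : finType) (e : rel V) : Prop :=
  symmetric e /\ irreflexive e.

Definition nbhd (V : finType) (e : rel V) (v : V) : {set V} := [set u | e v u].
Definition deg (V : finType) (e : rel V) (v : V) : nat := #|nbhd e v|.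

Definition max_deg (V : finType) (e : rel V) : nat := \max_(v : V) deg e v.

Definition edges (V : finType) (e : rel V) : {set {set V}} :=
  [set [set x; y] | x in V, y in V & e x y].

Definition leaves (V : finType) (e : rel V) : nat := #|[set v : V | deg e v == 1]|.

Definition connected_graph (V : finType) (e : rel V) : Prop :=
  forall x y : V, connect e x y.

(* a tree: connected acyclic graph, i.e. connected with |V| - 1 edges *)
Definition is_tree (V : finType) (e : rel V) : Prop :=
  simple_graph e /\ connected_graph e /\ #|edges e| = #|V| - 1.

Definition pack (V W : finType) (eG : rel V) (eH : rel W) : Prop :=
  exists f : W -> V, injective f /\
    forall x y : W, eH x y -> ~~ eG (f x) (f y).

(* Main.v *)
From mathcomp Require Import all_boot all_order perm zify.
Require Import Defs.
Set Implicit Arguments. Unset Strict Implicit. Unset Printing Implicit Defensive.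

Section Graph.
Variables (W : finType) (e : rel W).
Hypothesis esym : symmetric e.
Hypothesis eirr : irreflexive e.

Definition EdS (S : {set W}) := [set E in edges e | E \subset S].

Lemma mem_edges x y : e x y -> [set x; y] \in edges e.
Proof. by move=> exy; apply/imset2P; apply: (Imset2spec (x1:=x) (x2:=y)); rewrite ?inE. Qed.

Lemma card_nbhdS v (S : {set W}) :
  #|nbhd e v :&: S| = \sum_(w in S) (e v w : nat).
Proof.
rewrite -sum1_card big_mkcond [RHS]big_mkcond /=.
apply: eq_bigr => w _; rewrite /nbhd !inE.
by case: (e v w); case: (w \in S).
Qed.

Lemma handshake (S : {set W}) :
  \sum_(v in S) #|nbhd e v :&: S| <= 2 * #|EdS S|.
Proof.
under eq_bigr => v _ do rewrite card_nbhdS.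
rewrite pair_big_dep /=.
pose P (x : W * W) := [&& x.1 \in S, x.2 \in S & e x.1 x.2].
have -> : \sum_(x | (x.1 \in S) && (x.2 \in S)) (e x.1 x.2 : nat)
          = \sum_(x | P x) 1.
  rewrite [LHS]big_mkcond [RHS]big_mkcond /=; apply: eq_bigr => x _.
  by rewrite /P; case: (x.1 \in S); case: (x.2 \in S); case: (e _ _).
rewrite (partition_big (fun x => [set x.1; x.2]) (mem (EdS S))); last first.
  move=> [a b]; rewrite /P /= => /and3P [aS bS eab].
  rewrite inE mem_edges //= subUset !sub1set aS bS //.
rewrite mulnC -sum_nat_const; apply: leq_sum => E.
move=> HE; have : E \in EdS S by []. rewrite inE => /andP [/imset2P [a b _ Hb ->] _].
rewrite sum1_card.
have eab : e a b by move: Hb; rewrite inE.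
apply: (@leq_trans #|[set (a, b); (b, a)]|); last by rewrite cards2; case: (_ != _).
apply: subset_leq_card; apply/subsetP => [[x y]]; rewrite !inE /P /=.
move=> /andP [/and3P [_ _ exy] /eqP Exy] /=.
rewrite /= in Exy.
have xin : x \in [set a; b] by rewrite -Exy !inE eqxx.
have yin : y \in [set a; b] by rewrite -Exy !inE eqxx orbT.
move: xin yin; rewrite !inE => /orP [] /eqP ? /orP [] /eqP ?; subst;
  rewrite ?eqxx ?orbT //; by rewrite eirr in exy.
Qed.

Hypothesis conn : connected_graph e.

Lemma cross (S : {set W}) x y : x \in S -> y \notin S ->
  exists a b, [/\ a \in S, b \notin S & e a b].
Proof.
have := conn x y; case/connectP => p pth ->.
elim: p x pth => [|z p IH] x /=; first by move=> _ ->.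
move=> /andP [exz pth] xS lS.
case: (boolP (z \in S)) => zS; first exact: IH pth zS lS.
by exists x, z.
Qed.

Lemma outside (S : {set W}) : S != set0 -> #|~: S| <= #|edges e :\: EdS S|.
Proof.
move Hk: #|~: S| => k; elim: k S Hk => [|k IH] S Hk Sne //.
have [y yS] : exists y, y \in ~: S.
  by apply/set0Pn; rewrite -card_gt0 Hk.
have [x xS] : exists x, x \in S by apply/set0Pn.
rewrite inE in yS.
have [a [b [aS bS eab]]] := cross xS yS.
have Hk' : #|~: (b |: S)| = k.
  move: Hk; rewrite (cardsD1 b (~: S)) inE bS add1n => -[<-].
  by apply: eq_card => z; rewrite !inE negb_or andbC.
have Sne' : b |: S != set0 by apply/set0Pn; exists b; rewrite !inE eqxx.
have := IH _ Hk' Sne'.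
move=> H; apply: leq_ltn_trans H _.
apply: proper_card; apply/properP; split.
  apply/subsetP => E; rewrite !inE => /andP [HE1 HE2]; rewrite HE2 andbT.
  move: HE1; rewrite HE2 /=; apply: contra => /subsetP Hs; apply/subsetP => z /Hs.
  by rewrite inE => ->; rewrite orbT.
exists [set a; b].
  by rewrite !inE mem_edges //= subUset !sub1set aS /= andbT.
by rewrite !inE mem_edges //= subUset !sub1set !inE aS eqxx orbT.
Qed.

Hypothesis ecard : #|edges e| = #|W| - 1.

Lemma forest (S : {set W}) : S != set0 -> #|EdS S| < #|S|.
Proof.
move=> Sne; have H := outside Sne.
have H1 : #|edges e :&: EdS S| + #|edges e :\: EdS S| = #|edges e| by rewrite cardsID.
have E1 : edges e :&: EdS S = EdS S.
  by apply/setIidPr/subsetP => E; rewrite inE => /andP [].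
rewrite E1 in H1.
have H2 := cardsC S.
have : 0 < #|S| by rewrite card_gt0.
lia.
Qed.

Lemma low_vertex (S : {set W}) : S != set0 ->
  exists2 u, u \in S & #|nbhd e u :&: S| <= 1.
Proof.
move=> Sne.
case: (boolP [exists u in S, #|nbhd e u :&: S| <= 1]).
  by case/exists_inP => u; exists u.
move=> /exists_inPn Hall.
have H := handshake S.
have : \sum_(v in S) 2 <= \sum_(v in S) #|nbhd e v :&: S|.
  by apply: leq_sum => v /Hall; rewrite -ltnNge.
rewrite sum_nat_const => H'.
have := forest Sne. lia.
Qed.

Lemma deg_pos v : 1 < #|W| -> 0 < deg e v.
Proof.
move=> W2.
have [w wv] : exists w, w != v.
  case: (boolP [exists w, w != v]) => [/existsP [w Hw] | /existsPn H]; first by exists w.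
  exfalso; have : #|W| <= #|[set v]|.
    by apply: subset_leq_card; apply/subsetP => w _; rewrite inE; move: (H w); rewrite negbK.
  by rewrite cards1; lia.
have := conn v w; case/connectP => [[|z p]] /=.
  by move=> _ wv'; rewrite wv' eqxx in wv.
move=> /andP [evz _] _; rewrite /deg card_gt0; apply/set0Pn; exists z.
by rewrite /nbhd inE.
Qed.

Lemma sum_deg_all : \sum_v deg e v <= 2 * (#|W| - 1).
Proof.
have H := handshake [set: W]; rewrite -ecard.
have E1 : EdS [set: W] = edges e.
  by apply/setP => E; rewrite inE subsetT andbT.
rewrite E1 in H; apply: leq_trans H.
rewrite [X in _ <= X](eq_bigl (fun v => true)) //; last by move=> v; rewrite inE.
by apply: leq_sum => v _; rewrite setIT.
Qed.

Lemma card_as_sum (P : pred W) : #|[set v | P v]| = \sum_v (P v : nat).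
Proof.
rewrite -sum1_card big_mkcond /=; apply: eq_bigr => v _; rewrite inE.
by case: (P v).
Qed.

Lemma deg_sum (B : {set W}) : 1 < #|W| ->
  \sum_(v in B) deg e v + 2 <= 2 * #|B| + leaves e.
Proof.
move=> W2.
have Hall := sum_deg_all.
rewrite (bigID (mem B)) /= in Hall.
have HL : \sum_(v | ~~ (v \in B)) (deg e v == 1 : nat) <= leaves e.
  rewrite /leaves card_as_sum (bigID (mem B) predT) /=; exact: leq_addl.
have H2 : \sum_(v | ~~ (v \in B)) 2 <=
          \sum_(v | ~~ (v \in B)) deg e v + \sum_(v | ~~ (v \in B)) (deg e v == 1 : nat).
  rewrite -big_split /=; apply: leq_sum => v _.
  have := deg_pos v W2; case: (deg e v) => [|[|d]] //.
rewrite sum_nat_const in H2.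
have HC : #|[pred v | ~~ (v \in B)]| = #|~: B|.
  by apply: eq_card => v; rewrite !inE.
rewrite HC in H2.
have HB := cardsC B.
have HBB : \sum_(v | v \in B) deg e v = \sum_(v in B) deg e v by [].
move: Hall HL H2 HB W2. set a := (\sum_(i in B) _). set b := (\sum_(i | _) deg e i). set c := (\sum_(i | _) _ : nat). set n := #|W|. set nb := #|~: B|. set bb := #|B|. move=> h1 h2 h3 h4 h5. lia.
Qed.
End Graph.

Lemma inj_exists (V W : finType) : #|W| = #|V| -> exists f : W -> V, injective f.
Proof.
move=> H. exists (fun x => enum_val (cast_ord H (enum_rank x))).
by move=> x y /enum_val_inj /cast_ord_inj /enum_rank_inj.
Qed.

Lemma card_preim (V W : finType) (f : W -> V) (A : {set V}) :
  injective f -> #|[set w | f w \in A]| <= #|A|.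
Proof.
move=> injf; rewrite -(card_imset _ injf); apply: subset_leq_card.
by apply/subsetP => v /imsetP [w]; rewrite inE => Hw ->.
Qed.

Lemma card_bigcup_le (W I : finType) (P : pred I) (F : I -> {set W}) :
  #|\bigcup_(i | P i) F i| <= \sum_(i | P i) #|F i|.
Proof.
apply: (big_rec2 (fun (A : {set W}) (m : nat) => #|A| <= m)); first by rewrite cards0.
move=> i A m _ HA; apply: leq_trans (leq_add (leqnn _) HA).
by rewrite cardsU leq_subr.
Qed.

Lemma deg_le_max (V : finType) (eG : rel V) v : deg eG v <= max_deg eG.
Proof. exact: leq_bigmax. Qed.

Section Main.
Variables (V W : finType) (eG : rel V) (eT : rel W).
Hypothesis VW : #|W| = #|V|.
Hypothesis Gsym : symmetric eG.
Hypothesis Tsym : symmetric eT.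
Hypothesis Tirr : irreflexive eT.
Hypothesis Tconn : connected_graph eT.
Hypothesis Tcard : #|edges eT| = #|W| - 1.
Hypothesis Hbound : 3 * max_deg eG + leaves eT < #|W| + 2.

Lemma main_embed k : forall S : {set W}, #|S| = k ->
  exists f : W -> V, injective f /\
    forall x y, x \in S -> y \in S -> eT x y -> ~~ eG (f x) (f y).
Proof.
elim: k => [|k IH] S HS.
  have [f injf] := inj_exists VW; exists f; split => // x y xS.
  by move: HS; rewrite (cardsD1 x) xS.
have Sne : S != set0 by rewrite -card_gt0 HS.
have [u uS Nu] := low_vertex Tirr Tconn Tcard Sne.
set S' := S :\ u.
have HS' : #|S'| = k by move: HS; rewrite (cardsD1 u) uS add1n => -[].
have [f [injf Hf]] := IH S' HS'.
have inS' w : w \in S' = (w != u) && (w \in S) by rewrite !inE.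
have uS' : u \notin S' by rewrite inS' eqxx.
move: Nu; rewrite leq_eqVlt ltnS leqn0 cards_eq0 => /orP [/cards1P [p Hp] | /eqP N0].
- have pN : p \in nbhd eT u :&: S by rewrite Hp inE.
  have eup : eT u p by move: pN; rewrite !inE => /andP [].
  have pS : p \in S by move: pN; rewrite !inE => /andP [].
  have pu : p != u by apply: contraTneq eup => ->; rewrite Tirr.
  have pS' : p \in S' by rewrite inS' pu.
  have key y : y \in S -> eT u y -> y = p.
    by move=> yS euy; apply/set1P; rewrite -Hp !inE euy.
  have W2 : 1 < #|W|.
    rewrite -cardsT (cardsD1 u [set: W]) (cardsD1 p ([set: W] :\ u)) !inE pu.
    by rewrite addSn add1n ltnS ltnS.
  case: (boolP [exists z, (z \notin S') && ~~ eG (f p) (f z)]).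
    case/existsP => z /andP [zS' fpz].
    exists (fun w => f (tperm u z w)); split.
      by move=> a b /injf /perm_inj.
    have fix_w w : w \in S' -> tperm u z w = w.
      move=> wS'; rewrite tpermD //.
        by apply: contraNneq uS' => ->.
      by apply: contraNneq zS' => ->.
    move=> a b aS bS eab.
    case: (eqVneq a u) => [au | au].
      subst a; have bp := key b bS eab; subst b.
      by rewrite tpermL fix_w // Gsym.
    case: (eqVneq b u) => [bu | bu].
      subst b; have ap : a = p by apply: key aS _; rewrite Tsym.
      by subst a; rewrite tpermL fix_w.
    have aS' : a \in S' by rewrite inS' au.
    have bS' : b \in S' by rewrite inS' bu.
    by rewrite !fix_w //; apply: Hf.
  move=> /existsPn HB.
  have HB' z : z \notin S' -> eG (f p) (f z).
    by move=> zS'; have := HB z; rewrite zS' /= negbK.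
  case: (boolP [exists x in S', [&& x != p, ~~ eG (f p) (f x) &
                 [forall y in S', eT x y ==> ~~ eG (f u) (f y)]]]).
    case/exists_inP => x xS' /and3P [xp fpx /forall_inP Hx].
    exists (fun w => f (tperm u x w)); split.
      by move=> a b /injf /perm_inj.
    have xu : x != u by apply: contraNneq uS' => <-.
    have fix_w w : w \in S' -> w != x -> tperm u x w = w.
      move=> wS' wx; rewrite tpermD //; first by apply: contraNneq uS' => ->.
      by rewrite eq_sym.
    move=> a b aS bS eab.
    case: (eqVneq a u) => [au | au].
      subst a; have bp := key b bS eab; subst b.
      by rewrite tpermL fix_w // 1?eq_sym // Gsym.
    case: (eqVneq b u) => [bu | bu].
      subst b; have ap : a = p by apply: key aS _; rewrite Tsym.
      by subst a; rewrite tpermL fix_w // eq_sym.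
    have aS' : a \in S' by rewrite inS' au.
    have bS' : b \in S' by rewrite inS' bu.
    case: (eqVneq a x) => [ax | ax].
      subst a; have bx : b != x by apply: contraTneq eab => ->; rewrite Tirr.
      by rewrite tpermR fix_w //; apply: (implyP (Hx b bS')).
    case: (eqVneq b x) => [bx | bx].
      subst b; rewrite tpermR fix_w // Gsym.
      by apply: (implyP (Hx a aS')); rewrite Tsym.
    by rewrite !fix_w //; apply: Hf.
  move=> /exists_inPn Hno; exfalso.
  set D := max_deg eG.
  set Bad2 := [set x in S' | eG (f p) (f x)].
  set Bset := [set y | f y \in nbhd eG (f u)].
  set U := \bigcup_(y in Bset) nbhd eT y.
  set Bad3 := U :\ u.
  have Hcov : S' \subset p |: (Bad2 :|: Bad3).
    apply/subsetP => x xS'; have := Hno x xS'.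
    rewrite negb_and negbK negb_and negbK => /orP [/eqP -> | ]; first by rewrite !inE eqxx.
    move=> /orP [fpx | ]; first by apply/setU1P; right; apply/setUP; left; rewrite inE xS' fpx.
    move=> /forall_inPn [y yS']; rewrite negb_imply negbK => /andP [exy fuy].
    rewrite !inE; apply/orP; right; apply/orP; right; apply/andP; split.
      by apply: contraNneq uS' => <-.
    by apply/bigcupP; exists y; rewrite !inE // Tsym.
  have H1 : #|S'| <= 1 + (#|Bad2| + #|Bad3|).
    apply: leq_trans (subset_leq_card Hcov) _.
    rewrite cardsU1; apply: leq_add; first by case: (_ \notin _).
    by rewrite cardsU leq_subr.
  set P2 := [set w | f w \in nbhd eG (f p)].
  have H2 : #|Bad2| + #|~: S'| <= D.
    have E1 : P2 :&: S' = Bad2 by apply/setP => w; rewrite !inE andbC.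
    have E2 : P2 :\: S' = ~: S'.
      apply/setP => w; rewrite !inE -(inS' w); case: (boolP (w \in S')) => wS' //=; exact: HB'.
    rewrite -E1 -E2 cardsID.
    apply: leq_trans (card_preim (nbhd eG (f p)) injf) (deg_le_max _ _).
  have H3 : #|Bset| <= D.
    apply: leq_trans (card_preim (nbhd eG (f u)) injf) (deg_le_max _ _).
  have uU : u \in U.
    apply/bigcupP; exists p.
      by rewrite inE /nbhd inE Gsym; apply: HB'.
    by rewrite /nbhd inE Tsym.
  have H4 : #|Bad3| + 1 <= \sum_(y in Bset) deg eT y.
    apply: leq_trans (card_bigcup_le _ _).
    by rewrite [X in _ <= X](cardsD1 u) uU addnC.
  have H5 := deg_sum Tirr Tconn Tcard Bset W2.
  have H6 := cardsC S'.
  have H7 : #|S| <= #|W| by apply: max_card.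
  move: H1 H2 H3 H4 H5 H6 H7 Hbound; rewrite HS HS'.
  set a := \sum_(y in Bset) deg eT y.
  set b2 := #|Bad2|. set b3 := #|Bad3|. set c := #|~: S'|. set bb := #|Bset|.
  set n := #|W|. set l := leaves eT. set d := max_deg eG.
  move=> h1 h2 h3 h4 h5 h6 h7 h8; lia.
- exists f; split => //.
  move=> a b aS bS eab.
  have Nu y : y \in S -> ~~ eT u y.
    move=> yS; apply/negP => euy.
    have : y \in nbhd eT u :&: S by rewrite /nbhd !inE euy yS.
    by rewrite N0 inE.
  case: (eqVneq a u) => [au | au].
    by subst a; move: (Nu b bS); rewrite eab.
  case: (eqVneq b u) => [bu | bu].
    by subst b; move: (Nu a aS); rewrite Tsym eab.
  by apply: Hf => //; rewrite !inE ?au ?bu ?aS ?bS.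
Qed.
End Main.

Theorem corollary9 (n : nat) (V W : finType) (eG : rel V) (eT : rel W) :
  #|V| = n -> #|W| = n ->
  simple_graph eG -> is_tree eT ->
  3 * max_deg eG + leaves eT < n + 2 ->
  pack eG eT.
Proof.
move=> HV HW [Gsym Girr] [[Tsym Tirr] [Tconn Tcard]] Hb.
have VW : #|W| = #|V| by rewrite HV HW.
have Hb' : 3 * max_deg eG + leaves eT < #|W| + 2 by rewrite HW.
have [f [injf Hf]] := main_embed VW Gsym Tsym Tirr Tconn Tcard Hb' (cardsT W).
by exists f; split => // x y; apply: Hf; rewrite inE.
Qed.
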